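(* Let $D=(V,A)$ be a directed graph with $n=|V|$, $r\in V$, and let $(x,f)$ be a feasible solution of (Const-DRAT). Let $S=\{v:x_v>0\}$, $S_1=\{v\in S:x_v\ge n^{-1/3}\}$, $U=\{v\in S:x_v\ge n^{-2/3}\}$, $U'=S\setminus U$, and let $EX$ be the set of $v\in S_1$ such that there is no directed path from $r$ to $v$ in $D[U]$. For $v\in EX$ let $X_v$ be the set of $w\in U'$ such that there is a directed path from $w$ to $v$ in $D[U\cup\{w\}]$. Then $|X_v|\ge n^{1/3}$ for every $v\in EX$.
   Context: $\mathcal P_v$ is the set of simple directed paths from $r$ to $v$. (Const-DRAT), with node costs $c_v\ge0$, prizes $p_v\ge0$ and parameters $B,Q$: $\sum_v x_vp_v\ge Q$; $\sum_v x_vc_v\le B$; $\sum_{P\in\mathcal P_v}f^v_P=x_v$ ($v\ne r$); $\sum_{P\in\mathcal P_v:w\in P}f^v_P\le x_w$ ($v\ne r$, $w\ne v$); $0\le x_v\le1$; $0\le f^v_P\le1$. $D[W]$ denotes the induced subgraph. *)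

(* Defs.v *)
From HB Require Import structures.
From mathcomp Require Import all_boot all_order all_algebra.
From mathcomp Require Import reals exp.
Set Implicit Arguments. Unset Strict Implicit. Unset Printing Implicit Defensive.
Import Order.TTheory GRing.Theory Num.Theory.
Local Open Scope ring_scope.

Definition is_rpath (V : finType) (A : rel V) (r v : V) (s : seq V) : bool :=
  if s is a :: t then [&& a == r, path A r t, last r t == v & uniq s] else false.

(* Sum of F over the (finite) set P_v of simple directed r-v paths:
   every simple path has at most #|V| vertices, so we sum over tuples of each
   length k <= #|V| satisfying is_rpath. *)
Definition psum (R : realType) (V : finType) (A : rel V) (r v : V)
    (F : seq V -> R) : R :=
  \sum_(k < #|V|.+1) \sum_(t : k.-tuple V | is_rpath A r v t) F t.

Definition const_drat_feasible (R : realType) (V : finType) (A : rel V) (r : V)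
    (c p : V -> R) (B Q : R) (x : V -> R) (f : V -> seq V -> R) : Prop :=
  [/\ \sum_(v : V) x v * p v >= Q,
      \sum_(v : V) x v * c v <= B &
   [/\ (forall v, v != r -> psum A r v (f v) = x v),
      (forall v w, v != r -> w != v ->
          psum A r v (fun P => if w \in P then f v P else 0) <= x w),
      (forall v, 0 <= x v <= 1) &
      (forall v P, is_rpath A r v P -> 0 <= f v P <= 1)]].

Definition reach_in (V : finType) (A : rel V) (W : {set V}) (a b : V) : bool :=
  [&& a \in W, b \in W &
      connect [rel u w | [&& A u w, u \in W & w \in W]] a b].

(* Main.v *)
Require Import Defs.
From HB Require Import structures.
From mathcomp Require Import all_boot all_order all_algebra.
From mathcomp Require Import reals exp.
From mathcomp Require Import lra.
Import Order.TTheory GRing.Theory Num.Theory.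
Local Open Scope ring_scope.


Lemma path_restrict (V : finType) (A : rel V) (W : {set V}) a s :
  a \in W -> all (mem W) s -> path A a s ->
  path [rel u w | [&& A u w, u \in W & w \in W]] a s.
Proof.
elim: s a => [//|b s IH] a aW /= /andP[bW sW] /andP[ab ps].
by rewrite ab aW bW /= IH.
Qed.

Lemma reach_of_path (V : finType) (A : rel V) (W : {set V}) a s :
  a \in W -> all (mem W) s -> path A a s -> reach_in A W a (last a s).
Proof.
move=> aW sW ps; rewrite /reach_in aW.
have -> : last a s \in W.
  by case: s sW {ps} => [//|b s] /allP H; apply: H; rewrite /= mem_last.
by apply/connectP; exists s => //; exact: path_restrict.
Qed.

Lemma last_out (V : finType) (A : rel V) (U : {set V}) v : v \in U ->
  forall s a, path A a s -> last a s = v ->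
  all (mem U) (a :: s) \/ exists2 w, w \in a :: s & (w \notin U) && reach_in A (w |: U) w v.
Proof.
move=> vU; elim=> [|b s IH] a /=.
  by move=> _ ->; left; rewrite vU.
move=> /andP[ab ps] ls; case: (IH b ps ls) => [allb|[w wi wP]]; last first.
  by right; exists w => //; rewrite inE wi orbT.
case aU: (a \in U); first by left; apply/andP; split.
right; exists a; first by rewrite mem_head.
rewrite aU /= -ls; apply: (@reach_of_path _ _ _ a (b :: s)).
- by rewrite setU11.
- apply/allP => y ys; move/allP: allb => H.
  have := H y ys; rewrite /= !inE => ->; by rewrite orbT.
- by rewrite /= ab.
Qed.

Theorem claim2 (R : realType) (V : finType) (A : rel V) (r : V)
    (c p : V -> R) (B Q : R) (x : V -> R) (f : V -> seq V -> R) :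
  (forall v, 0 <= c v) -> (forall v, 0 <= p v) ->
  const_drat_feasible A r c p B Q x f ->
  let n : R := #|V|%:R in
  let S := [set v | 0 < x v] in
  let S1 := [set v in S | n `^ (- 3^-1) <= x v] in
  let U := [set v in S | n `^ (- (2 / 3)) <= x v] in
  let U' := S :\: U in
  let EX := [set v in S1 | ~~ reach_in A U r v] in
  forall v, v \in EX ->
    let X := [set w in U' | reach_in A (w |: U) w v] in
    n `^ 3^-1 <= #|X|%:R.
Proof.
move=> c0 p0 [_ _ [Hx Hw Hx01 Hf]] n S S1 U U' EX v vEX.
change (n `^ 3^-1 <= #|[set w in U' | reach_in A (w |: U) w v]|%:R).
set X := [set w in U' | reach_in A (w |: U) w v].
have n1 : 1 <= n.
  have : (0 < #|V|)%N by apply/card_gt0P; exists v.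
  by rewrite /n -(ler_nat R) => /le_trans; apply; rewrite lexx.
set N := n `^ (- (2 / 3)); set M := n `^ (- 3^-1).
have NM : N <= M by apply: ler_powR => //; lra.
have N0 : 0 < N by apply: powR_gt0; lra.
move: vEX; rewrite /EX /S1 /S !inE => /andP[/andP[xv0 Mxv] nreach].
have vU : v \in U by rewrite /U /S !inE xv0 /= (le_trans NM Mxv).
have vr : v != r.
  by apply/eqP => evr; move: nreach; rewrite -evr /reach_in vU connect0.
pose X' := [set w | (w \notin U) && reach_in A (w |: U) w v].
have key : x v <= \sum_(w in X') x w.
  rewrite -(Hx v vr) /psum.
  apply: (@le_trans _ _ (\sum_(k < #|V|.+1) \sum_(t : k.-tuple V | is_rpath A r v t)
      \sum_(w in X') (if w \in (t : seq V) then f v t else 0))).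
    apply: ler_sum => k _; apply: ler_sum => t tP.
    have [w wt wX] : exists2 w, w \in (t : seq V) & w \in X'.
      move: tP; case: (tval t) => [//|a s] /= /and4P[/eqP -> ps /eqP ls _].
      case: (@last_out _ A U v vU s r ps ls) => [allU|[w wi wP]]; last first.
        by exists w => //; rewrite inE.
      case/andP: allU => rU sU; move: nreach.
      by rewrite -ls (@reach_of_path _ A U r s rU sU ps).
    rewrite (bigD1 w) //= wt lerDl; apply: sumr_ge0 => u _.
    by case: ifP => // _; case/andP: (Hf v t tP).
  under eq_bigr => k _ do rewrite exchange_big.
  rewrite exchange_big; apply: ler_sum => w wX.
  apply: Hw => //; apply/eqP => ewv; move: wX; rewrite inE ewv vU.
  done.
have key2 : \sum_(w in X') x w <= #|X|%:R * N.
  apply: (@le_trans _ _ (\sum_(w in X') (if 0 < x w then N else 0))).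
    apply: ler_sum => w; rewrite inE => /andP[wU _].
    case: ifP => h.
      by move: wU; rewrite /U !inE h /= -ltNge => /ltW.
    by rewrite leNgt h.
  rewrite -big_mkcondr sumr_const -[X in X <= _]mulr_natl; apply: ler_wpM2r; first exact: ltW.
  rewrite ler_nat; apply: eq_leq; apply: eq_card => w.
  rewrite /X /U' /U /S !inE.
  rewrite unfold_in /= /X' !inE.
  by case: (0 < x w); case: (_ <= x w); case: reach_in.
have TN : n `^ 3^-1 * N = M.
  rewrite /N /M -powRD; first by congr (_ `^ _); lra.
  by apply/implyP => _; rewrite gt_eqF // (lt_le_trans _ n1).
rewrite -(ler_pM2r N0) TN.
exact: le_trans Mxv (le_trans key key2).
Qed.
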